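(* Run the mechanism BFM-SWM described in the context with $\ell=2$ and arbitrary $B>0$, $\alpha>1$, $\beta>1$, $\epsilon>0$, with all sellers behaving truthfully, and let $S_{i,t}$ ($i\in\{1,2\}$, $t\in[M]$), $\rho_M$, $u^*$ be as defined in the context. Let $O$ be an optimal solution of $\max\{v(S)-c(S): S\subseteq\mathcal{N},\ c(S)\le B\}$. Then $$v(O)-2\beta\cdot c(O)\ \le\ 2\rho_M+2\sum_{i=1}^{2}\sum_{t=1}^{M}v(S_{i,t})+2v(u^* ).$$
   Context: Setting. $\mathcal{N}$ is a finite set of $n$ sellers. The valuation $v:2^{\mathcal{N}}\to\mathbb{R}_{\ge 0}$ satisfies $v(\emptyset)=0$ and is submodular (for $X\subseteq Y\subseteq\mathcal{N}$ and $u\notin Y$, $v(u\mid Y)\le v(u\mid X)$), not necessarily monotone, where $v(S\mid T)=v(S\cup T)-v(T)$, $v(u\mid T)=v(\{u\}\mid T)$. Each seller $u$ has a private cost $c(u)\ge 0$; $c(X)=\sum_{u\in X}c(u)$, $p(X)=\sum_{u\in X}p(u)$. $B>0$ is the budget, $[\ell]=\{1,\dots,\ell\}$. Sellers behave truthfully: a seller $u$ offered price $q$ accepts iff $c(u)\le q$. Mechanism BFM-SWM (inputs $B$, $\alpha>1$, $\beta>1$, $\epsilon>0$, $\ell\in\{1,2\}$): 1. Offer every seller the price $B$; let $R$ be the set of sellers who accept, and set $p(u)=B$ for $u\in R$. 2. Set $t=0$, $\rho_0=\epsilon/\alpha$, $u^*=\emptyset$ ($u^*$ is a set of at most one seller),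 and $S_{i,0}=\emptyset$ for $i\in[\ell]$. 3. Repeat rounds: set $t\leftarrow t+1$, $\rho_t=\alpha\rho_{t-1}$, $S_{i,t}=\emptyset$ for all $i\in[\ell]$. Process the sellers $u\in R\setminus(\bigcup_{i=1}^{\ell}S_{i,t-1}\cup u^* )$ one at a time in a fixed order. For each such $u$: pick $j\in\arg\max_{i\in[\ell]}v(u\mid S_{i,t})$ (current contents); update $p(u)\leftarrow\min\{p(u),\ v(u\mid S_{j,t})/(\beta+\rho_t/B)\}$ and offer $p(u)$ to $u$. If $u$ accepts: if $v(S_{j,t}\cup\{u\})-p(S_{j,t}\cup\{u\})>\rho_t$ (current prices), set $u^*\leftarrow\{u\}$ and end the round immediately; otherwise add $u$ to $S_{j,t}$. If $u$ rejects, remove $u$ from $R$. After the round, stop if $R\setminus\left(\bigcup_{i=1}^{\ell}(S_{i,t-1}\cup S_{i,t})\cup u^*\right)=\emptyset$; otherwise start another round. 4. Let $M$ be the final value of $t$. Output $S^*\in\arg\max_{A\in\{S_{i,t}: i\in[\ell],\ t\in\{M-1,M\}\}\cup\{u^*\}}\big(v(A)-p(A)\big)$, paying each $u\in S^*$ its current price $p(u)$. Notation: $S_{i,t}$ denotes the contents of that candidate set at the end of round $t$; $\rho_M$ is the threshold of the last round; $u^*$ denotes its value at termination (possibly $\emptyset$, with $v(\emptyset)=0$). *)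

(* Defs.v *)
(* Mechanism BFM-SWM with ell = 2, modelled as a relation
   describing all valid executions (ties in the argmax are arbitrary). *)
From HB Require Import structures.
From mathcomp Require Import all_boot all_order all_algebra.
Set Implicit Arguments. Unset Strict Implicit. Unset Printing Implicit Defensive.
Import Order.TTheory GRing.Theory Num.Theory.
Local Open Scope ring_scope.

Definition marg (T : finType) (R : numDomainType) (v : {set T} -> R)
  (u : T) (S : {set T}) : R := v (u |: S) - v S.

Definition submodular (T : finType) (R : numDomainType) (v : {set T} -> R) :=
  forall (X Y : {set T}) (u : T), X \subset Y -> u \notin Y ->
    marg v u Y <= marg v u X.

Definition costs (T : finType) (R : numDomainType) (c : T -> R) (X : {set T}) : R :=
  \sum_(x in X) c x.

(* State inside a round: remaining set R, prices p, current S_{1,t}, S_{2,t},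
   u*, and a flag telling whether the round has been ended early. *)
Record rstate (T : finType) (R : realFieldType) := RS {
  rs_R : {set T}; rs_p : T -> R; rs_S1 : {set T}; rs_S2 : {set T};
  rs_us : {set T}; rs_stop : bool }.

Definition sel (T : finType) (R : realFieldType) (j : bool) (s : rstate T R) :=
  if j then rs_S1 s else rs_S2 s.

Definition step_with (T : finType) (R : realFieldType) (v : {set T} -> R)
  (c : T -> R) (B beta rho : R) (j : bool) (u : T) (s : rstate T R) : rstate T R :=
  let Sj := sel j s in
  let pn := Order.min (rs_p s u) (marg v u Sj / (beta + rho / B)) in
  let p' := fun x => if x == u then pn else rs_p s x in
  if c u <= pn then
    if rho < v (u |: Sj) - \sum_(x in u |: Sj) p' x
    then RS (rs_R s) p' (rs_S1 s) (rs_S2 s) [set u] true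
    else if j then RS (rs_R s) p' (u |: rs_S1 s) (rs_S2 s) (rs_us s) false
              else RS (rs_R s) p' (rs_S1 s) (u |: rs_S2 s) (rs_us s) false
  else RS (rs_R s :\ u) p' (rs_S1 s) (rs_S2 s) (rs_us s) false.

Definition step (T : finType) (R : realFieldType) (v : {set T} -> R)
  (c : T -> R) (B beta rho : R) (u : T) (s s' : rstate T R) : Prop :=
  exists j : bool, marg v u (sel (~~ j) s) <= marg v u (sel j s) /\
                   s' = step_with v c B beta rho j u s.

Inductive proc (T : finType) (R : realFieldType) (v : {set T} -> R)
  (c : T -> R) (B beta rho : R) : seq T -> rstate T R -> rstate T R -> Prop :=
| proc_nil s : proc v c B beta rho [::] s s
| proc_ended u l s : rs_stop s = true -> proc v c B beta rho (u :: l) s s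
| proc_cons u l s s1 s2 : rs_stop s = false -> step v c B beta rho u s s1 ->
    proc v c B beta rho l s1 s2 -> proc v c B beta rho (u :: l) s s2.

(* threshold of round t : rho_0 = eps/alpha, rho_t = alpha rho_{t-1} *)
Definition rho_t (R : realFieldType) (alpha eps : R) (t : nat) : R :=
  eps / alpha * alpha ^+ t.

Definition stop_after (T : finType) (Rt S1 S2 us : nat -> {set T}) (t : nat) : bool :=
  Rt t :\: (S1 t.-1 :|: S2 t.-1 :|: S1 t :|: S2 t :|: us t) == set0.

(* A complete execution of BFM-SWM (ell = 2) terminating after round M.
   ord is the fixed processing order; Rt t, pt t, S1 t, S2 t, us t are the
   values of R, p, S_{1,t}, S_{2,t}, u* at the end of round t (t = 0: initial). *)
Definition BFM_SWM2_run (T : finType) (R : realFieldType) (v : {set T} -> R)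
  (c : T -> R) (B alpha beta eps : R) (ord : seq T) (M : nat)
  (Rt : nat -> {set T}) (pt : nat -> T -> R) (S1 S2 us : nat -> {set T}) : Prop :=
  Rt 0%N = [set u | c u <= B] /\ pt 0%N = (fun _ => B) /\
  S1 0%N = set0 /\ S2 0%N = set0 /\ us 0%N = set0 /\
  (1 <= M)%N /\
      (forall t, (1 <= t <= M)%N ->
         exists b,
         proc v c B beta (rho_t alpha eps t)
           [seq u <- ord | u \in Rt t.-1 :\: (S1 t.-1 :|: S2 t.-1 :|: us t.-1)]
           (RS (Rt t.-1) (pt t.-1) set0 set0 (us t.-1) false)
           (RS (Rt t) (pt t) (S1 t) (S2 t) (us t) b)) /\
  (forall t, (1 <= t < M)%N -> ~~ stop_after Rt S1 S2 us t) /\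
  stop_after Rt S1 S2 us M.

(* Main.v *)
Require Import Defs.
From HB Require Import structures.
From mathcomp Require Import all_boot all_order all_algebra.
From mathcomp Require Import ring lra.
Import Order.TTheory GRing.Theory Num.Theory.
Local Open Scope ring_scope.
Set Implicit Arguments. Unset Strict Implicit.

Lemma set_ind2 (T : finType) (P : {set T} -> Prop) :
  P set0 -> (forall (x : T) (D : {set T}), x \notin D -> P D -> P (x |: D)) -> forall D, P D.
Proof.
move=> H0 HS D; move: {2}#|D| (erefl #|D|) => n; elim: n D => [|n IH] D hD.
  by move/eqP: hD; rewrite cards_eq0 => /eqP ->.
have : (0 < #|D|)%N by rewrite hD.
rewrite card_gt0 => /set0Pn [x xD].
rewrite -(setD1K xD); apply: HS; first by rewrite !inE eqxx.
by apply: IH; move: hD; rewrite (cardsD1 x D) xD add1n => -[].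
Qed.

Lemma sub_setmarg (T : finType) (R : realFieldType) (v : {set T} -> R) :
  submodular v -> forall D X Y : {set T}, X \subset Y -> (forall z, z \in D -> z \notin Y) ->
  v (D :|: Y) - v Y <= v (D :|: X) - v X.
Proof.
move=> hs D; elim/set_ind2: D => [|x D xD IH] X Y XY.
  by rewrite !set0U !subrr.
move=> hd; have xY : x \notin Y by apply: hd; rewrite !inE eqxx.
have dDY : forall z, z \in D -> z \notin Y by move=> z zD; apply: hd; rewrite !inE zD orbT.
have h1 := IH _ _ XY dDY.
have h2 : marg v x (D :|: Y) <= marg v x (D :|: X).
  apply: hs; first by rewrite setUS.
  by rewrite !inE negb_or xD xY.
move: h2; rewrite /marg -!setUA; lra.
Qed.

Lemma setmarg_sum (T : finType) (R : realFieldType) (v : {set T} -> R) :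
  submodular v -> forall D Y : {set T}, (forall z, z \in D -> z \notin Y) ->
  v (D :|: Y) - v Y <= \sum_(u in D) marg v u Y.
Proof.
move=> hs D; elim/set_ind2: D => [|x D xD IH] Y.
  by rewrite set0U subrr big_set0.
move=> hd; have xY : x \notin Y by apply: hd; rewrite !inE eqxx.
have dDY : forall z, z \in D -> z \notin Y by move=> z zD; apply: hd; rewrite !inE zD orbT.
rewrite big_setU1 //=.
have h1 := IH _ dDY.
have h2 : marg v x (D :|: Y) <= marg v x Y.
  apply: hs; first by rewrite subsetUr.
  by rewrite !inE negb_or xD xY.
move: h2; rewrite /marg -!setUA; lra.
Qed.

Lemma submod_lattice (T : finType) (R : realFieldType) (v : {set T} -> R) :
  submodular v -> forall X Y : {set T},
  v (X :|: Y) + v (X :&: Y) <= v X + v Y.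
Proof.
move=> hs X Y.
have := @sub_setmarg _ _ v hs (Y :\: X) (X :&: Y) X (subsetIl X Y).
have -> : Y :\: X :|: X = X :|: Y.
  by apply/setP => z; rewrite !inE; case: (z \in X); case: (z \in Y).
have -> : Y :\: X :|: X :&: Y = Y.
  by apply/setP => z; rewrite !inE; case: (z \in X); case: (z \in Y).
move=> h; (have : v (X :|: Y) - v X <= v Y - v (X :&: Y) by apply: h => z; rewrite !inE => /andP []); lra.
Qed.
Lemma sum_sub_le (T : finType) (R : realFieldType) (A B : {set T}) (F : T -> R) :
  A \subset B -> (forall x, x \in B -> 0 <= F x) ->
  \sum_(x in A) F x <= \sum_(x in B) F x.
Proof.
move=> AB hF; rewrite (big_setID A (A := B)) /=.
have -> : B :&: A = A by apply/setIidPr.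
rewrite lerDl; apply: sumr_ge0 => x; rewrite inE => /andP [_ ?]; exact: hF.
Qed.

Lemma half_bound (T : finType) (R : realFieldType) (v : {set T} -> R) (c : T -> R)
  (K : R) (S1 S2 Rj Q : {set T}) (f2 : T -> R) :
  submodular v -> (forall u, 0 <= c u) -> 0 <= K ->
  (forall y, y \in S2 -> marg v y S1 <= f2 y /\ 0 <= f2 y) ->
  \sum_(y in S2) f2 y <= v S2 ->
  (forall u, u \in Rj -> marg v u S1 <= K * c u) ->
  Q \subset S1 :|: S2 :|: Rj ->
  v (Q :|: S1) <= v S1 + v S2 + K * costs c Q.
Proof.
move=> hs hc hK hf2 hsum hRj hQ.
have -> : Q :|: S1 = (Q :\: S1) :|: S1.
  by apply/setP => z; rewrite !inE; case: (z \in Q); case: (z \in S1).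
have h1 := @setmarg_sum _ _ v hs (Q :\: S1) S1.
have h1' : v (Q :\: S1 :|: S1) - v S1 <= \sum_(u in Q :\: S1) marg v u S1.
  by apply: h1 => z; rewrite !inE => /andP [].
set h := fun u => if u \in S2 then f2 u else 0.
have h2 : \sum_(u in Q :\: S1) marg v u S1 <=
          \sum_(u in Q :\: S1) (h u + K * c u).
  apply: ler_sum => u; rewrite !inE => /andP [uS1 uQ].
  have := subsetP hQ u uQ; rewrite !inE (negbTE uS1) /= /h.
  case uS2: (u \in S2) => /= uR.
    have [? _] := hf2 u uS2; have := mulr_ge0 hK (hc u); lra.
  rewrite add0r; exact: hRj.
have h3 : \sum_(u in Q :\: S1) h u <= \sum_(u in S2) f2 u.
  apply: (@le_trans _ _ (\sum_(u in [set: T]) h u)).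
    apply: sum_sub_le; first exact: subsetT.
    by move=> x _; rewrite /h; case: ifP => // /hf2 [].
  rewrite [X in _ <= X]big_mkcond [X in X <= _]big_mkcond /=.
  by apply: ler_sum => u _; rewrite /h in_setT.
have h4 : \sum_(u in Q :\: S1) K * c u <= K * costs c Q.
  rewrite /costs mulr_sumr; apply: sum_sub_le; first exact: subsetDl.
  by move=> x _; apply: mulr_ge0.
move: h2; rewrite [X in _ <= X]big_split /= => h2; lra.
Qed.

Definition pairinv (T : finType) (R : realFieldType) (v : {set T} -> R)
  (A B : {set T}) (fA fB : T -> R) :=
  [/\ A :&: B = set0,
    (forall y, y \in A -> marg v y B <= fA y /\ 0 <= fA y),
    \sum_(y in A) fA y <= v A,
    (forall y, y \in B -> marg v y A <= fB y /\ 0 <= fB y) &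
    \sum_(y in B) fB y <= v B].

Lemma round_bound (T : finType) (R : realFieldType) (v : {set T} -> R) (c : T -> R)
  (K : R) (S1 S2 Rj Q : {set T}) (f1 f2 : T -> R) :
  (forall S, 0 <= v S) -> submodular v -> (forall u, 0 <= c u) -> 0 <= K ->
  pairinv v S1 S2 f1 f2 ->
  (forall u, u \in Rj -> marg v u S1 <= K * c u /\ marg v u S2 <= K * c u) ->
  Q \subset S1 :|: S2 :|: Rj ->
  v Q <= 2 * (v S1 + v S2) + 2 * K * costs c Q.
Proof.
move=> hv hs hc hK [h0 hf1 hs1 hf2 hs2] hRj hQ.
have a1 := half_bound hs hc hK hf2 hs2 (fun u uR => (hRj u uR).1) hQ.
have hQ' : Q \subset S2 :|: S1 :|: Rj by rewrite (setUC S2).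
have a2 := half_bound hs hc hK hf1 hs1 (fun u uR => (hRj u uR).2) hQ'.
have l := submod_lattice hs (Q :|: S1) (Q :|: S2).
have e : (Q :|: S1) :&: (Q :|: S2) = Q.
  apply/setP => z; rewrite !inE; case zQ: (z \in Q) => //=.
  apply/negP => /andP [z1 z2].
  have : z \in S1 :&: S2 by rewrite inE z1 z2.
  by rewrite h0 inE.
rewrite e in l.
have := hv ((Q :|: S1) :|: (Q :|: S2)); lra.
Qed.

Lemma pair_sym (T : finType) (R : realFieldType) (v : {set T} -> R) A B fA fB :
  pairinv v A B fA fB -> pairinv v B A fB fA.
Proof. by case=> h0 h1 h2 h3 h4; split => //; rewrite setIC. Qed.

Lemma pair_ins (T : finType) (R : realFieldType) (v : {set T} -> R) A B fA fB x :
  submodular v -> pairinv v A B fA fB -> x \notin A -> x \notin B ->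
  marg v x B <= marg v x A -> 0 <= marg v x A ->
  pairinv v (x |: A) B (fun y => if y == x then marg v x A else fA y) fB.
Proof.
move=> hs [h0 h1 h2 h3 h4] xA xB hm hm0; split => //.
- by rewrite setIUl h0 setU0; apply/setP => z; rewrite !inE;
     case: eqP => // ->; rewrite (negbTE xB).
- move=> y; rewrite !inE; case: eqP => [-> _|ne yA]; first by split.
  exact: h1.
- rewrite big_setU1 //= eqxx.
  rewrite (eq_bigr fA); last by move=> y yA; case: eqP => // e; rewrite -e yA in xA.
  by move: h2; rewrite /marg; lra.
- move=> y yB; have [hy1 hy2] := h3 y yB; split => //.
  apply: le_trans hy1; apply: hs; first exact: subsetUr.
  rewrite !inE negb_or; apply/andP; split.
    by apply/eqP => e; rewrite -e yB in xB.
  apply/negP => yA; have : y \in A :&: B by rewrite inE yA yB.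
  by rewrite h0 inE.
Qed.

Definition rinv (T : finType) (R : realFieldType) (v : {set T} -> R) (c : T -> R)
  (K : R) (Rs : {set T}) (s : rstate T R) :=
  [/\ exists f1 f2, pairinv v (rs_S1 s) (rs_S2 s) f1 f2,
      (forall u, u \in Rs -> u \notin rs_R s ->
         [/\ u \notin rs_S1 s, u \notin rs_S2 s,
             marg v u (rs_S1 s) <= K * c u & marg v u (rs_S2 s) <= K * c u]),
      (forall y, y \in rs_R s -> c y <= rs_p s y) &
      (rs_us s = set0 \/ exists w, rs_us s = [set w])].

Definition okelt (T : finType) (R : realFieldType) (s : rstate T R) (y : T) :=
  [/\ y \in rs_R s, y \notin rs_S1 s & y \notin rs_S2 s].

Lemma step_inv (T : finType) (R : realFieldType) (v : {set T} -> R) (c : T -> R)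
  (B beta rho : R) (Rs : {set T}) (s s1 : rstate T R) (x : T) :
  submodular v -> (forall u, 0 <= c u) -> 0 < beta + rho / B ->
  rinv v c (beta + rho / B) Rs s -> okelt s x ->
  step v c B beta rho x s s1 ->
  rinv v c (beta + rho / B) Rs s1 /\
  (forall y, y != x -> okelt s y -> okelt s1 y).
Proof.
move=> hs hc hK [[f1 [f2 hp]] hrej hpr hus] [xR xS1 xS2] [j [hj ->]].
set K := beta + rho / B.
rewrite /step_with.
set pn := Order.min _ _.
set p' := fun y => if y == x then pn else rs_p s y.
have hcx := hpr x xR.
case: ifP => hacc.
  have hpr' : forall y, y \in rs_R s -> c y <= p' y.
    by move=> y yR; rewrite /p'; case: eqP => [->|_] //; apply: hpr.
  have hm0 : 0 <= marg v x (sel j s).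
    move: hacc; rewrite /pn le_min => /andP [_ h].
    have := le_trans (hc x) h; rewrite ler_pdivlMr // mul0r //.
  case: ifP => hrho.
    split; last by [].
    split.
    - by exists f1, f2.
    - exact: hrej.
    - exact: hpr'.
    - by right; exists x.
  clearbody p' pn; clear hrho; destruct j; simpl in hj, hm0 |- *.
    split; last first.
      move=> y yx [yR y1 y2]; split => //=.
      by rewrite !inE negb_or yx.
    split => /=.
    - by exists (fun y => if y == x then marg v x (rs_S1 s) else f1 y), f2; apply: pair_ins.
    - move=> u uRs uR; have [u1 u2 m1 m2] := hrej u uRs uR.
      have ux : u != x by apply/eqP => e; rewrite e xR in uR.
      split => //; first by rewrite !inE negb_or ux.
      apply: le_trans m1; apply: hs; first exact: subsetUr.
      by rewrite !inE negb_or ux.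
    - exact: hpr'.
    - exact: hus.
  split; last first.
    move=> y yx [yR y1 y2]; split => //=.
    by rewrite !inE negb_or yx.
  split => /=.
  - exists f1, (fun y => if y == x then marg v x (rs_S2 s) else f2 y).
    by apply: pair_sym; apply: pair_ins => //; apply: pair_sym.
  - move=> u uRs uR; have [u1 u2 m1 m2] := hrej u uRs uR.
    have ux : u != x by apply/eqP => e; rewrite e xR in uR.
    split => //; first by rewrite !inE negb_or ux.
    apply: le_trans m2; apply: hs; first exact: subsetUr.
    by rewrite !inE negb_or ux.
  - exact: hpr'.
  - exact: hus.
have hmx : marg v x (sel j s) <= K * c x.
  move/negbT: hacc; rewrite -ltNge /pn gt_min => /orP [h|h].
    by move: h; rewrite ltNge hcx.
  by move: h; rewrite ltr_pdivrMr // mulrC => /ltW.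
split; last first.
  move=> y yx [yR y1 y2]; split => //=.
  by rewrite !inE yx.
split => /=.
- by exists f1, f2.
- move=> u uRs; rewrite !inE negb_and negbK => /orP [/eqP ->|uR].
    split => //; clear -hj hmx; destruct j; simpl in hj, hmx; lra.
  exact: hrej.
- move=> y; rewrite !inE => /andP [yx yR]; rewrite /p' (negbTE yx); exact: hpr.
- exact: hus.
Qed.

Lemma proc_inv (T : finType) (R : realFieldType) (v : {set T} -> R) (c : T -> R)
  (B beta rho : R) (Rs : {set T}) l (s s' : rstate T R) :
  submodular v -> (forall u, 0 <= c u) -> 0 < beta + rho / B ->
  proc v c B beta rho l s s' ->
  rinv v c (beta + rho / B) Rs s -> uniq l -> (forall y, y \in l -> okelt s y) ->
  rinv v c (beta + rho / B) Rs s'.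
Proof.
move=> hs hc hK; elim => //= u l0 s0 s1 s2 _ hst _ IH hi /andP [ul ul0] hok.
have [hi1 hok1] := step_inv hs hc hK hi (hok u (mem_head _ _)) hst.
apply: IH => // y yl; apply: hok1; first by apply/eqP => e; rewrite -e yl in ul.
by apply: hok; rewrite inE yl orbT.
Qed.

Lemma subadd_disj (T : finType) (R : realFieldType) (v : {set T} -> R) (A Q : {set T}) :
  v set0 = 0 -> submodular v -> (forall z, z \in Q -> z \notin A) ->
  v (A :|: Q) <= v A + v Q.
Proof.
move=> hv0 hs hd.
have := @sub_setmarg _ _ v hs Q set0 A (sub0set A) hd.
by rewrite setU0 setUC hv0; lra.
Qed.

Lemma costs_disj (T : finType) (R : realFieldType) (c : T -> R) (A Q : {set T}) :
  (forall z, z \in Q -> z \notin A) ->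
  costs c (A :|: Q) = costs c A + costs c Q.
Proof.
move=> hd; rewrite /costs (big_setID A (A := A :|: Q)) /=.
have -> : (A :|: Q) :&: A = A by apply/setIidPr; exact: subsetUl.
have -> // : (A :|: Q) :\: A = Q.
apply/setP => z; rewrite !inE; case zQ: (z \in Q).
  by rewrite (negbTE (hd z zQ)).
by case: (z \in A).
Qed.

Fixpoint Ucup (T : finType) (G : nat -> {set T}) (k : nat) : {set T} :=
  if k is k'.+1 then Ucup G k' :|: G k'.+1 else set0.

Lemma Ucup_sub (T : finType) (G : nat -> {set T}) k t :
  (1 <= t <= k)%N -> G t \subset Ucup G k.
Proof.
elim: k => [|k IH] /andP [t1 tk]; first by move: (leq_trans t1 tk).
rewrite /=; move: tk; rewrite leq_eqVlt => /orP [/eqP ->|tk].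
  exact: subsetUr.
apply: subset_trans (subsetUl _ _); apply: IH; by rewrite t1.
Qed.

Lemma exists_drop (P : nat -> bool) M :
  P 0%N -> ~~ P M -> exists t, [/\ (1 <= t <= M)%N, P t.-1 & ~~ P t].
Proof.
elim: M => [|M IH] h0 hM; first by rewrite h0 in hM.
case hPM: (P M).
  by exists M.+1; rewrite /= hPM hM leqnn.
have [t [/andP [t1 tM] h1 h2]] := IH h0 (negbT hPM).
by exists t; split => //; rewrite t1 (leq_trans tM).
Qed.

Unset Implicit Arguments. Set Strict Implicit.

Theorem lemma4p3 (T : finType) (R : realFieldType) (v : {set T} -> R) (c : T -> R)
  (B alpha beta eps : R) (ord : seq T)
  (M : nat) (Rt : nat -> {set T}) (pt : nat -> T -> R) (S1 S2 us : nat -> {set T})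
  (O : {set T}) :
  v set0 = 0 -> (forall S, 0 <= v S) -> submodular v ->
  (forall u, 0 <= c u) ->
  0 < B -> 1 < alpha -> 1 < beta -> 0 < eps ->
  uniq ord -> (forall u, u \in ord) ->
  BFM_SWM2_run v c B alpha beta eps ord M Rt pt S1 S2 us ->
  costs c O <= B ->
  (forall S : {set T}, costs c S <= B -> v S - costs c S <= v O - costs c O) ->
  v O - 2 * beta * costs c O <=
    2 * rho_t alpha eps M
    + 2 * (\sum_(1 <= t < M.+1) (v (S1 t) + v (S2 t)))
    + 2 * v (us M).
Proof.
move=> hv0 hv hs hc hB ha hb he huniq hall
  [hR0 [hp0 [h10 [h20 [hu0 [hM [hrun [_ hstop]]]]]]]] hcO _.
set K := fun t => beta + rho_t alpha eps t / B.
have KE : forall t, K t = beta + rho_t alpha eps t / B by [].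
clearbody K.
have a0 : 0 < alpha by apply: lt_trans ha; exact: ltr01.
have rpos : forall t, 0 < rho_t alpha eps t.
  by move=> t; rewrite /rho_t; apply: mulr_gt0; [apply: divr_gt0 | apply: exprn_gt0].
have rmono : forall t, rho_t alpha eps t <= rho_t alpha eps t.+1.
  move=> t; rewrite /rho_t exprS; apply: ler_wpM2l.
    by apply: ltW; apply: divr_gt0.
  have := exprn_gt0 t a0; nra.
have Kpos : forall t, 0 < K t.
  move=> t; rewrite KE; apply: ltr_wpDr; last by apply: lt_trans hb; exact: ltr01.
  by apply: ltW; apply: divr_gt0.
have Kmono : forall t, K t <= K t.+1.
  by move=> t; rewrite !KE lerD2l; apply: ler_wpM2r; [rewrite invr_ge0 ltW | apply: rmono].
have glob : forall k, (k <= M)%N ->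
  (forall y, y \in Rt k -> c y <= pt k y) /\ (us k = set0 \/ exists w, us k = [set w]).
  elim => [|k IH] hk.
    split; last by left.
    by move=> y; rewrite hR0 hp0 inE.
  have [hpr hus] := IH (ltnW hk).
  have [b hp] := hrun k.+1 hk.
  have Kp := Kpos k.+1; rewrite KE in Kp.
  have := proc_inv (Rs := Rt k) hs hc Kp hp.
  rewrite -KE.
  case.
  - split => /=.
    + exists (fun _ => 0), (fun _ => 0); split; rewrite ?setI0 ?big_set0 ?hv0 //.
      by move=> y; rewrite inE.
      by move=> y; rewrite inE.
    + by move=> u ->.
    + exact: hpr.
    + exact: hus.
  - exact: filter_uniq.
  - move=> y; rewrite mem_filter !inE => /andP [/andP [_ yR] _]; by rewrite /okelt /= !inE.
  - by move=> _ _ /= h1 h2; split.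
have round : forall t, (1 <= t <= M)%N ->
  (exists f1 f2, pairinv v (S1 t) (S2 t) f1 f2) /\
  (forall u, u \in Rt t.-1 :\: Rt t ->
     marg v u (S1 t) <= K t * c u /\ marg v u (S2 t) <= K t * c u).
  move=> [|t] // /andP [_ hk].
  have [hpr hus] := glob t (ltnW hk).
  have [b hp] := hrun t.+1 hk.
  have Kp := Kpos t.+1; rewrite KE in Kp.
  have := proc_inv (Rs := Rt t) hs hc Kp hp.
  rewrite -KE.
  case.
  - split => /=.
    + exists (fun _ => 0), (fun _ => 0); split; rewrite ?setI0 ?big_set0 ?hv0 //.
      by move=> y; rewrite inE.
      by move=> y; rewrite inE.
    + by move=> u ->.
    + exact: hpr.
    + exact: hus.
  - exact: filter_uniq.
  - move=> y; rewrite mem_filter !inE => /andP [/andP [_ yR] _]; by rewrite /okelt /= !inE.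
  - move=> /= h1 h2 _ _; split => // u; rewrite inE => /andP [u1 u2].
    by have [_ _ ? ?] := h2 u u2 u1.
set G := fun t => S1 t :|: S2 t :|: (Rt t.-1 :\: Rt t).
have rb : forall t, (1 <= t <= M)%N -> forall Q : {set T}, Q \subset G t ->
    v Q <= 2 * (v (S1 t) + v (S2 t)) + 2 * K t * costs c Q.
  move=> t ht Q hQ; have [[f1 [f2 hp]] hrj] := round t ht.
  exact: (round_bound hv hs hc (ltW (Kpos t)) hp hrj hQ).
have ind : forall k, (k <= M)%N ->
    v (O :&: Ucup G k) <= 2 * (\sum_(1 <= t < k.+1) (v (S1 t) + v (S2 t)))
                          + 2 * K k * costs c (O :&: Ucup G k).
  elim => [|k IH] hk.
    rewrite /= setI0 hv0 big_geq // /costs big_set0; lra.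
  have IH' := IH (ltnW hk).
  set A := O :&: Ucup G k.
  set Q := (O :&: G k.+1) :\: Ucup G k.
  have hd : forall z, z \in Q -> z \notin A.
    by move=> z; rewrite !inE => /andP [h _]; rewrite negb_and h orbT.
  have eq : O :&: Ucup G k.+1 = A :|: Q.
    apply/setP => z; rewrite /= !inE.
    by case: (z \in O); case: (z \in Ucup G k); case: (z \in G k.+1).
  rewrite eq costs_disj //.
  have h1 := subadd_disj hv0 hs hd.
  have h2 := rb k.+1 hk Q (subset_trans (subsetDl _ _) (subsetIr _ _)).
  have h3 : K k * costs c A <= K k.+1 * costs c A.
    apply: ler_wpM2r (Kmono k); rewrite /costs; apply: sumr_ge0 => *; exact: hc.
  rewrite big_nat_recr //=.
  rewrite [2 * K k.+1 * _]mulrDr.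
  lra.
have GM : forall t, (1 <= t <= M)%N -> G t \subset Ucup G M.
  by move=> t ht; apply: Ucup_sub.
have cov : forall u, u \in O -> u \in Ucup G M \/ u \in us M.
  move=> u uO.
  have cu : c u <= B.
    apply: le_trans hcO; rewrite /costs.
    have <- : \sum_(x in [set u]) c x = c u by rewrite big_set1.
    by apply: sum_sub_le; [rewrite sub1set | move=> *; apply: hc].
  have u0 : u \in Rt 0%N by rewrite hR0 inE.
  case uM: (u \in Rt M).
    move/eqP: hstop => hst.
    have : u \notin Rt M :\: (S1 M.-1 :|: S2 M.-1 :|: S1 M :|: S2 M :|: us M).
      by rewrite hst inE.
    rewrite inE uM andbT negbK !inE.
    have hMM : (1 <= M <= M)%N by rewrite hM leqnn.
    case/orP => [/orP [/orP [/orP [hu|hu]|hu]|hu]|hu].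
    - case hM1: M.-1 => [|m]; first by rewrite hM1 h10 inE in hu.
      left; apply: (subsetP (GM M.-1 _)); first by rewrite hM1 /= -hM1 leq_pred.
      by rewrite /G !inE hu.
    - case hM1: M.-1 => [|m]; first by rewrite hM1 h20 inE in hu.
      left; apply: (subsetP (GM M.-1 _)); first by rewrite hM1 /= -hM1 leq_pred.
      by rewrite /G !inE hu orbT.
    - by left; apply: (subsetP (GM M hMM)); rewrite /G !inE hu.
    - by left; apply: (subsetP (GM M hMM)); rewrite /G !inE hu orbT.
    - by right.
  have [t [ht h1 h2]] := @exists_drop (fun k => u \in Rt k) M u0 (negbT uM).
  left; apply: (subsetP (GM t ht)).
  by rewrite /G !inE h1 /= h2 /= !orbT.
set U := Ucup G M.
have eO : O = (O :&: U) :|: (O :\: U).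
  apply/setP => z; rewrite !inE; case zO: (z \in O); case zU: (z \in U) => //.
have hd : forall z, z \in O :\: U -> z \notin O :&: U.
  by move=> z; rewrite !inE => /andP [h _]; rewrite negb_and h orbT.
have h1 := subadd_disj hv0 hs hd; rewrite -eO in h1.
have hsub : O :\: U \subset us M.
  apply/subsetP => z; rewrite inE => /andP [zU zO].
  by case: (cov z zO) => //; rewrite (negbTE zU).
have h2 : v (O :\: U) <= v (us M).
  have [_ [hu|[w hw]]] := glob M (leqnn M).
    move: hsub; rewrite hu subset0 => /eqP ->; rewrite hv0 //.
  move: hsub; rewrite hw subset1 => /orP [/eqP ->|/eqP ->] //.
  rewrite hv0; exact: hv.
have h3 := ind M (leqnn M).
set cp := costs c (O :&: U).
have hc1 : cp <= costs c O.
  by apply: sum_sub_le; [exact: subsetIl | move=> *; exact: hc].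
have hc0 : 0 <= cp by apply: sumr_ge0 => *; exact: hc.
have h4 : K M * cp <= beta * costs c O + rho_t alpha eps M.
  rewrite KE mulrDl; apply: lerD; first by apply: ler_wpM2l => //; apply: ltW; apply: lt_trans hb; exact: ltr01.
  rewrite mulrAC ler_pdivrMr //; apply: ler_wpM2l; [exact: ltW | exact: le_trans hcO].
have h5 : 2 * K M * cp = 2 * (K M * cp) by rewrite mulrA.
have h6 := hv (us M).
rewrite h5 in h3.
lra.
Qed.
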